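(* Let $V$ be a finite set of vertices, let $(V,E)$ be the complete undirected graph on $V$, and let $w:E\to\mathbb{R}$ be arbitrary edge weights (write $w_{ij}=w_{ji}=w(\{i,j\})$). Consider the two $0$--$1$ integer linear programs $$\text{(P)}:\quad \max \sum_{\{i,j\}\in E} w_{ij}x_{ij}\ \text{ s.t. } x_{ij}+x_{jk}\le 1+x_{ik}\ \text{for all distinct } i,j,k\in V,\quad x_{ij}\in\{0,1\}\ \text{for all distinct } i,j\in V,$$ $$\text{(FRP)}:\quad \max \sum_{\{i,j\}\in E} w_{ij}x_{ij}\ \text{ s.t. } x_{ij}+x_{jk}\le 1+x_{ik}\ \text{for all distinct } i,j,k\in V \text{ with } w_{ij}+w_{jk}\ge 0,\quad x_{ij}\in\{0,1\}\ \text{for all distinct } i,j\in V.$$ Then the set of optimal solutions of (FRP) coincides with the set of optimal solutions of (P).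
   Context: Variables are indexed by unordered pairs of distinct vertices, i.e. $x_{ij}$ and $x_{ji}$ denote the same variable, one for each edge $\{i,j\}\in E$. The constraints $x_{ij}+x_{jk}\le 1+x_{ik}$ (transitivity constraints) are imposed for every ordered triple of distinct vertices satisfying the stated condition. Problem (P) is the standard formulation of the clique partitioning problem, whose feasible solutions are exactly the incidence vectors of edge sets of vertex partitions of $V$ into cliques. *)

(* Defs.v *)
From HB Require Import structures.
From mathcomp Require Import all_boot all_order all_algebra.
Set Implicit Arguments. Unset Strict Implicit. Unset Printing Implicit Defensive.
Import Order.TTheory GRing.Theory Num.Theory.
Local Open Scope ring_scope.

Definition cedges (V : finType) : {set {set V}} := [set e : {set V} | #|e| == 2%N].

(* A 0-1 solution vector x indexed by edges is represented by its support
   S \subset cedges V ;  x_{ij} = 1 iff {i,j} \in S. *)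
Definition xv (R : realFieldType) (V : finType) (S : {set {set V}}) (i j : V) : R :=
  ([set i; j] \in S)%:R.

Definition tri_ok (R : realFieldType) (V : finType) (S : {set {set V}}) (i j k : V) : Prop :=
  xv R S i j + xv R S j k <= 1 + xv R S i k.

(* Objective  sum_{e in E} w_e x_e ; w : {set V} -> R is only used on edges. *)
Definition obj (R : realFieldType) (V : finType) (w : {set V} -> R) (S : {set {set V}}) : R :=
  \sum_(e in cedges V) w e * (e \in S)%:R.

Definition feasP (R : realFieldType) (V : finType) (S : {set {set V}}) : Prop :=
  S \subset cedges V /\
  forall i j k : V, i != j -> j != k -> i != k -> tri_ok R S i j k.

Definition feasFRP (R : realFieldType) (V : finType) (w : {set V} -> R)
  (S : {set {set V}}) : Prop :=
  S \subset cedges V /\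
  forall i j k : V, i != j -> j != k -> i != k ->
    0 <= w [set i; j] + w [set j; k] -> tri_ok R S i j k.

Definition optimal (R : realFieldType) (V : finType) (feas : {set {set V}} -> Prop)
  (f : {set {set V}} -> R) (S : {set {set V}}) : Prop :=
  feas S /\ forall S', feas S' -> f S' <= f S.

(* Main.v *)
Require Import Defs.
From HB Require Import structures.
From mathcomp Require Import all_boot all_order all_algebra.
From mathcomp Require Import lra.
Import Order.TTheory GRing.Theory Num.Theory.
Local Open Scope ring_scope.
Set Implicit Arguments. Unset Strict Implicit.

Lemma tri_okP (R : realFieldType) (V : finType) (S : {set {set V}}) (i j k : V) :
  tri_ok R S i j k <-> ([set i; j] \in S) && ([set j; k] \in S) ==> ([set i; k] \in S).
Proof.
rewrite /tri_ok /xv.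
case: ([set i; j] \in S); case: ([set j; k] \in S); case: ([set i; k] \in S) => /=;
  split => // H; try lra.
Qed.

Lemma in_cedges (V : finType) (e : {set V}) : (e \in cedges V) = (#|e| == 2%N).
Proof. by rewrite /cedges inE. Qed.

Lemma sum_pairs (R : realFieldType) (V : finType) (g : {set V} -> R) :
  \sum_(p : V * V | p.1 != p.2) g [set p.1; p.2] = (\sum_(e in cedges V) g e) *+ 2.
Proof.
rewrite (partition_big (fun p : V * V => [set p.1; p.2]) (mem (cedges V))); last first.
  by move=> [a b] /= ab; rewrite /cedges inE cards2 ab.
rewrite -sumrMnl; apply: eq_bigr => e He.
have : #|e| == 2%N.
  by rewrite -in_cedges.
move=> /cards2P [a [b [ab Ee]]].
rewrite Ee.
rewrite (eq_bigl (pred2 (a, b) (b, a))); last first.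
  move=> [x y] /=; apply/idP/idP.
    move=> /andP [xy /eqP E].
    have xa : x \in [set a; b] by rewrite -E !inE eqxx.
    have ya : y \in [set a; b] by rewrite -E !inE eqxx orbT.
    move: xa ya xy; rewrite !inE => /orP [] /eqP -> /orP [] /eqP ->;
      rewrite /= ?xpair_eqE ?eqxx ?orbT ?andbT //= ?eqxx //.
  case/orP => /eqP [-> ->]; first by rewrite ab eqxx.
  by rewrite eq_sym ab setUC eqxx.
rewrite (bigD1 (a, b)) /=; last by rewrite eqxx.
rewrite (big_pred1 (b, a)) /=; first by rewrite [[set b; a]]setUC mulr2n.
move=> [x y] /=; rewrite !xpair_eqE.
case: (x =P a) => [->|xa]; case: (y =P b) => [->|yb] /=; rewrite ?andbF ?andbT //=.
by rewrite (negbTE ab).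
Qed.

Definition Nb (V : finType) (S : {set {set V}}) (x : V) : {set V} :=
  [set y | (y == x) || ([set x; y] \in S)].

Definition cutS (V : finType) (S : {set {set V}}) (X : {set V}) : {set {set V}} :=
  [set e in S | (e \subset X) || (e \subset ~: X)].

Lemma in_cut (V : finType) (S : {set {set V}}) (X : {set V}) (u v : V) :
  ([set u; v] \in cutS S X) = ([set u; v] \in S) && ((u \in X) == (v \in X)).
Proof.
rewrite /cutS inE !subUset !sub1set !inE.
by case: (u \in X); case: (v \in X).
Qed.

Lemma cut_sub (V : finType) (S : {set {set V}}) (X : {set V}) : cutS S X \subset S.
Proof. by apply/subsetP => e; rewrite inE => /andP []. Qed.

Lemma cut_tri (R : realFieldType) (V : finType) (S : {set {set V}}) (X : {set V}) i j k :
  tri_ok R S i j k -> tri_ok R (cutS S X) i j k.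
Proof.
move/tri_okP => H; apply/tri_okP; rewrite !in_cut; move: H.
case: ([set i; j] \in S); case: ([set j; k] \in S); case: ([set i; k] \in S);
case: (i \in X); case: (j \in X); case: (k \in X) => //.
Qed.

Lemma cut_feasFRP (R : realFieldType) (V : finType) (w : {set V} -> R)
  (S : {set {set V}}) (X : {set V}) : feasFRP w S -> feasFRP w (cutS S X).
Proof.
move=> [Hs Ht]; split; first exact: subset_trans (cut_sub S X) Hs.
by move=> i j k ij jk ik hw; apply: cut_tri; apply: Ht.
Qed.

Lemma set1_notin (V : finType) (S : {set {set V}}) (u : V) :
  S \subset cedges V -> [set u; u] \notin S.
Proof.
move=> Hs; apply/negP => /(subsetP Hs); rewrite in_cedges setUid cards1 //.
Qed.

Lemma obj_cut (R : realFieldType) (V : finType) (w : {set V} -> R)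
  (S : {set {set V}}) (X : {set V}) :
  obj w S - obj w (cutS S X) =
  \sum_(e in cedges V) w e * ((e \in S) && ~~ ((e \subset X) || (e \subset ~: X)))%:R.
Proof.
rewrite /obj -sumrB; apply: eq_bigr => e _; rewrite -mulrBr; congr (_ * _).
rewrite /cutS inE.
case: (e \in S); case: ((e \subset X) || (e \subset ~: X)) => /=; by rewrite ?subrr ?subr0.
Qed.

Definition viol (V : finType) (S : {set {set V}}) (v u x : V) : bool :=
  [&& [set v; u] \in S, [set u; x] \in S, [set v; x] \notin S & v != x].

Lemma viol_sym (V : finType) (S : {set {set V}}) (v u x : V) :
  viol S v u x = viol S x u v.
Proof.
rewrite /viol [[set v; u]]setUC [[set v; x]]setUC [[set x; u]]setUC eq_sym.
by case: ([set u; x] \in S); case: ([set u; v] \in S).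
Qed.

Lemma cross_viol (V : finType) (S : {set {set V}}) (u v x : V) :
  S \subset cedges V ->
  [&& [set u; v] \in S, u \in Nb S x & v \notin Nb S x] = viol S v u x.
Proof.
move=> Hs; rewrite /viol /Nb !inE.
case: (u =P x) => [->|ux] /=.
  rewrite (negbTE (set1_notin x Hs)) andbF /=.
  by case: ([set x; v] \in S); rewrite ?orbT ?andbF.
rewrite [[set u; v]]setUC [[set x; u]]setUC [[set x; v]]setUC.
by case: ([set v; u] \in S); case: ([set u; x] \in S); case: ([set v; x] \in S);
  case: (v == x).
Qed.

Lemma xor_split (R : realFieldType) (s a b : bool) :
  (s && ~~ ((a && b) || (~~ a && ~~ b)))%:R = ([&& s, a & ~~ b])%:R + ([&& s, b & ~~ a])%:R :> R.
Proof. by case: s; case: a; case: b; rewrite /= ?addr0 ?add0r. Qed.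

Lemma sum_cut_x (R : realFieldType) (V : finType) (w : {set V} -> R)
  (S : {set {set V}}) (x : V) : S \subset cedges V ->
  (obj w S - obj w (cutS S (Nb S x))) *+ 2 =
  \sum_u \sum_v w [set u; v] * ((viol S v u x)%:R + (viol S u v x)%:R).
Proof.
move=> Hs.
rewrite obj_cut -(sum_pairs (fun e => w e * ((e \in S) &&
   ~~ ((e \subset Nb S x) || (e \subset ~: Nb S x)))%:R)).
rewrite big_mkcond /= -(pair_bigA _ (fun u v => if u != v then
   w [set u; v] * (([set u; v] \in S) &&
   ~~ (([set u; v] \subset Nb S x) || ([set u; v] \subset ~: Nb S x)))%:R else 0)) /=.
apply: eq_bigr => u _; apply: eq_bigr => v _.
case: (u =P v) => [<-|uv] /=.
  by rewrite /viol (negbTE (set1_notin u Hs)) /= addr0 mulr0.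
congr (_ * _).
rewrite !subUset !sub1set !in_setC xor_split.
rewrite cross_viol //; congr (_ + _).
rewrite -(cross_viol _ _ _ Hs) [[set v; u]]setUC.
by case: ([set u; v] \in S); case: (u \in Nb S x); case: (v \in Nb S x).
Qed.

Lemma sum_cut (R : realFieldType) (V : finType) (w : {set V} -> R)
  (S : {set {set V}}) : S \subset cedges V ->
  \sum_x (obj w S - obj w (cutS S (Nb S x))) =
  \sum_x \sum_u \sum_v w [set u; v] * (viol S v u x)%:R.
Proof.
move=> Hs; apply: (pmulrnI (isT : (0 < 2)%N)) => /=.
rewrite -!sumrMnl; apply: eq_bigr => x _; rewrite sum_cut_x // mulr2n.
transitivity ((\sum_u \sum_v w [set u; v] * (viol S v u x)%:R) +
   (\sum_u \sum_v w [set u; v] * (viol S u v x)%:R)).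
  rewrite -big_split; apply: eq_bigr => u _; rewrite -big_split; apply: eq_bigr => v _.
  by rewrite mulrDr.
congr (_ + _); rewrite exchange_big /=.
by apply: eq_bigr => u _; apply: eq_bigr => v _; rewrite setUC.
Qed.

Lemma triple_swap (R : realFieldType) (V : finType) (H : V -> V -> V -> R) :
  \sum_x \sum_u \sum_v H x u v = \sum_v \sum_u \sum_x H x u v.
Proof.
rewrite exchange_big /=.
under eq_bigr => u _ do rewrite exchange_big /=.
by rewrite exchange_big.
Qed.

Lemma sum_neg (R : realFieldType) (I : finType) (G : I -> R) (i0 : I) :
  (forall i, G i <= 0) -> G i0 < 0 -> \sum_i G i < 0.
Proof.
move=> H0 H1; rewrite (bigD1 i0) //=.
have : \sum_(i | i != i0) G i <= 0.
  by rewrite -oppr_ge0 -sumrN; apply: sumr_ge0 => i _; rewrite oppr_ge0.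
move=> H2; lra.
Qed.

Lemma sum_nonpos (R : realFieldType) (I : finType) (G : I -> R) :
  (forall i, G i <= 0) -> \sum_i G i <= 0.
Proof.
by move=> H0; rewrite -oppr_ge0 -sumrN; apply: sumr_ge0 => i _; rewrite oppr_ge0.
Qed.

Lemma viol_w (R : realFieldType) (V : finType) (w : {set V} -> R)
  (S : {set {set V}}) v u x : feasFRP w S -> viol S v u x ->
  w [set u; v] + w [set u; x] < 0.
Proof.
move=> [Hs Ht] Hv; rewrite ltNge; apply/negP => H0.
have Hv' := Hv; move: Hv' => /and4P [H1 H2 H3 H4].
have vu : v != u.
  by apply/eqP => E; move: H1; rewrite E (negbTE (set1_notin u Hs)).
have ux : u != x.
  by apply/eqP => E; move: H2; rewrite E (negbTE (set1_notin x Hs)).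
have := Ht v u x vu ux H4; rewrite [[set v; u]]setUC; move=> /(_ H0) /tri_okP.
by rewrite H1 H2 /= (negbTE H3).
Qed.

Lemma T_neg (R : realFieldType) (V : finType) (w : {set V} -> R)
  (S : {set {set V}}) v0 u0 x0 : feasFRP w S -> viol S v0 u0 x0 ->
  \sum_x \sum_u \sum_v w [set u; v] * (viol S v u x)%:R < 0.
Proof.
move=> HF Hv.
set T := (X in X < 0).
have E : T = \sum_x \sum_u \sum_v w [set u; x] * (viol S v u x)%:R.
  rewrite /T triple_swap.
  by apply: eq_bigr => x _; apply: eq_bigr => u _; apply: eq_bigr => v _;
    rewrite viol_sym.
have : T + T < 0.
  rewrite {2}E -big_split /=.
  apply: (@sum_neg _ _ _ x0).
    move=> x; rewrite -big_split /=; apply: sum_nonpos => u.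
    rewrite -big_split /=; apply: sum_nonpos => v.
    rewrite -mulrDl; case Hb: (viol S v u x); last by rewrite mulr0.
    by rewrite mulr1 ltW // (viol_w HF Hb).
  rewrite -big_split /=; apply: (@sum_neg _ _ _ u0).
    move=> u; rewrite -big_split /=; apply: sum_nonpos => v.
    rewrite -mulrDl; case Hb: (viol S v u x0); last by rewrite mulr0.
    by rewrite mulr1 ltW // (viol_w HF Hb).
  rewrite -big_split /=; apply: (@sum_neg _ _ _ v0).
    move=> v; rewrite -mulrDl; case Hb: (viol S v u0 x0); last by rewrite mulr0.
    by rewrite mulr1 ltW // (viol_w HF Hb).
  by rewrite -mulrDl Hv mulr1 (viol_w HF Hv).
move=> H; lra.
Qed.

Lemma improve_step (R : realFieldType) (V : finType) (w : {set V} -> R)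
  (S : {set {set V}}) v u x : feasFRP w S -> viol S v u x ->
  exists y, obj w S < obj w (cutS S (Nb S y)).
Proof.
move=> HF Hv.
case: (pickP (fun y => obj w S < obj w (cutS S (Nb S y)))) => [y Hy|H].
  by exists y.
exfalso.
have := T_neg HF Hv; rewrite -sum_cut; last exact: HF.1.
have : 0 <= \sum_y (obj w S - obj w (cutS S (Nb S y))).
  apply: sumr_ge0 => y _; rewrite subr_ge0.
  by have := H y; rewrite /= leNgt => ->.
move=> H1 H2; lra.
Qed.

Lemma noviol_feasP (R : realFieldType) (V : finType) (S : {set {set V}}) :
  S \subset cedges V -> (forall v u x, ~~ viol S v u x) -> feasP R S.
Proof.
move=> Hs N; split => // i j k ij jk ik; apply/tri_okP; apply/implyP => /andP [H1 H2].
apply/negPn/negP => H3; have := N i j k; by rewrite /viol H1 H2 H3 ik.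
Qed.

Lemma feasP_FRP (R : realFieldType) (V : finType) (w : {set V} -> R)
  (S : {set {set V}}) : feasP R S -> feasFRP w S.
Proof. by move=> [Hs Ht]; split => // i j k ij jk ik _; apply: Ht. Qed.

Lemma improve (R : realFieldType) (V : finType) (w : {set V} -> R) (n : nat) :
  forall S : {set {set V}}, (#|S| <= n)%N -> feasFRP w S -> exists S', feasP R S' /\ obj w S <= obj w S'.
Proof.
elim: n => [|n IH] S HS HF.
  exists S; split => //; apply: noviol_feasP; first exact: HF.1.
  move=> v u x; apply/negP => /and4P [H1 _ _ _].
  have E : S = set0 by apply/eqP; rewrite -cards_eq0 -leqn0.
  by rewrite E inE in H1.
case: (boolP [exists v, exists u, exists x, viol S v u x]).
  move=> /existsP [v /existsP [u /existsP [x Hv]]].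
  have [y Hy] := improve_step HF Hv.
  have HF' := cut_feasFRP (Nb S y) HF.
  have Hlt : (#|cutS S (Nb S y)| < #|S|)%N.
    apply: proper_card; rewrite properEneq cut_sub andbT.
    by apply/eqP => E; move: Hy; rewrite E ltxx.
  have [S' [H1 H2]] := IH _ (leq_trans Hlt HS) HF'.
  by exists S'; split => //; exact: le_trans (ltW Hy) H2.
move=> Hn; exists S; split => //; apply: noviol_feasP; first exact: HF.1.
move=> v u x; apply/negP => Hv; move/negP: Hn; apply; apply/existsP; exists v;
  apply/existsP; exists u; apply/existsP; exists x; exact: Hv.
Qed.

Unset Implicit Arguments.

Theorem theorem1 (R : realFieldType) (V : finType) (w : {set V} -> R)
  (S : {set {set V}}) :
  optimal (feasFRP w) (obj w) S <-> optimal (@feasP R V) (obj w) S.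
Proof.
split.
  move=> [HF Hopt].
  have HP : feasP R S.
    case: (boolP [exists v, exists u, exists x, viol S v u x]).
      move=> /existsP [v /existsP [u /existsP [x Hv]]].
      have [y Hy] := improve_step HF Hv.
      have := Hopt _ (cut_feasFRP (Nb S y) HF).
      by rewrite leNgt Hy.
    move=> Hn; apply: noviol_feasP; first exact: HF.1.
    move=> v u x; apply/negP => Hv; move/negP: Hn; apply; apply/existsP; exists v;
      apply/existsP; exists u; apply/existsP; exists x; exact: Hv.
  by split => // S' HS'; apply: Hopt; apply: feasP_FRP.
move=> [HP Hopt]; split; first exact: feasP_FRP.
move=> S' HS'; have [S'' [H1 H2]] := improve (leqnn _) HS'.
exact: le_trans H2 (Hopt _ H1).
Qed.
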